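(* Let $(G,\tau,\partial)$ be a Polish topometric group with the Steinhaus property, and let $H$ be a second countable topological group. If $\varphi\colon(G,\partial)\to H$ is a continuous group homomorphism, then $\varphi\colon(G,\tau)\to H$ is continuous.
   Context: A Polish topometric group is a triple $(G,\tau,\partial)$ with $(G,\tau)$ a Polish group, $\partial$ a bi-invariant metric whose topology refines $\tau$ and which is $\tau$-lower semi-continuous. For $A\subseteq G$, $(A)_\varepsilon=\{g\colon\partial(g,A)<\varepsilon\}$. A subset $A$ of $G$ is $\sigma$-syndetic if $G$ is covered by countably many left translates of $A$. The topometric group $G$ has the Steinhaus property if there is an integer $k$ such that for every symmetric $\sigma$-syndetic $A\subseteq G$ and every $\varepsilon>0$, $1_G\in\mathrm{Int}_\tau\big((A^k)_\varepsilon\big)$. *)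

(* Defs.v *)
From HB Require Import structures.
From mathcomp Require Import all_boot all_order all_algebra.
From mathcomp Require Import all_classical all_reals all_analysis.
Set Implicit Arguments. Unset Strict Implicit. Unset Printing Implicit Defensive.
Import Order.TTheory GRing.Theory Num.Theory.
Local Open Scope classical_set_scope.
Local Open Scope ring_scope.

Definition group_law (T : Type) (mul : T -> T -> T) (inv : T -> T) (one : T) : Prop :=
  [/\ (forall x y z, mul x (mul y z) = mul (mul x y) z),
      (forall x, mul one x = x), (forall x, mul x one = x),
      (forall x, mul (inv x) x = one) & (forall x, mul x (inv x) = one)].

Definition topological_group (T : topologicalType)
    (mul : T -> T -> T) (inv : T -> T) (one : T) : Prop :=
  [/\ group_law mul inv one,
      continuous (fun p : T * T => mul p.1 p.2) & continuous inv].

Definition is_metric (R : realType) (T : Type) (d : T -> T -> R) : Prop :=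
  [/\ (forall x y, 0 <= d x y), (forall x y, d x y = 0 <-> x = y),
      (forall x y, d x y = d y x) & (forall x y z, d x z <= d x y + d y z)].

Definition metric_open (R : realType) (T : Type) (d : T -> T -> R) (A : set T) : Prop :=
  forall x, A x -> exists2 e : R, 0 < e & [set y | d x y < e] `<=` A.

Definition metric_compatible (R : realType) (T : topologicalType) (d : T -> T -> R) : Prop :=
  forall A : set T, open A <-> metric_open d A.

Definition metric_complete (R : realType) (T : topologicalType) (d : T -> T -> R) : Prop :=
  forall u : nat -> T,
    (forall e : R, 0 < e -> exists N : nat, forall m n : nat,
        (N <= m)%N -> (N <= n)%N -> d (u m) (u n) < e) ->
    exists x : T, u @ \oo --> x.

Definition separable_space (T : topologicalType) : Prop :=
  exists S : set T, countable S /\ dense S.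

Definition polish_space (R : realType) (T : topologicalType) : Prop :=
  separable_space T /\
  exists d : T -> T -> R, [/\ is_metric d, metric_compatible d & metric_complete d].

Definition polish_group (R : realType) (T : topologicalType)
    (mul : T -> T -> T) (inv : T -> T) (one : T) : Prop :=
  topological_group mul inv one /\ polish_space R T.

(* ---------- Polish topometric groups (G, tau, dd); tau = topology of G ---------- *)
Definition polish_topometric_group (R : realType) (G : topologicalType)
    (mul : G -> G -> G) (inv : G -> G) (one : G) (dd : G -> G -> R) : Prop :=
  [/\ polish_group R mul inv one,
      is_metric dd,
      (forall g x y, dd (mul g x) (mul g y) = dd x y /\ dd (mul x g) (mul y g) = dd x y),
      (forall A : set G, open A -> metric_open dd A) &
      (forall r : R, closed [set p : G * G | dd p.1 p.2 <= r])].

Fixpoint set_pow (G : Type) (mul : G -> G -> G) (one : G) (A : set G) (k : nat) : set G :=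
  match k with
  | 0%N => [set one]
  | k'.+1 => [set z | exists a b, [/\ A a, set_pow mul one A k' b & z = mul a b]]
  end.

Definition symmetric_set (G : Type) (inv : G -> G) (A : set G) : Prop :=
  forall x, A x <-> A (inv x).

Definition sigma_syndetic (G : Type) (mul : G -> G -> G) (A : set G) : Prop :=
  exists g : nat -> G, forall x, exists n : nat, exists2 a, A a & x = mul (g n) a.

(* (A)_e = {g | dd(g, A) < e}, where dd(g, A) = inf_{a in A} dd(g, a) *)
Definition thickening (R : realType) (G : Type) (dd : G -> G -> R) (A : set G) (e : R) : set G :=
  [set g | exists2 a, A a & dd g a < e].

Definition steinhaus_property (R : realType) (G : topologicalType)
    (mul : G -> G -> G) (inv : G -> G) (one : G) (dd : G -> G -> R) : Prop :=
  exists k : nat, forall A : set G,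
    symmetric_set inv A -> sigma_syndetic mul A ->
    forall e : R, 0 < e -> interior (thickening dd (set_pow mul one A k) e) one.

Definition metric_continuous (R : realType) (G : Type) (H : topologicalType)
    (dd : G -> G -> R) (f : G -> H) : Prop :=
  forall U : set H, open U -> metric_open dd (f @^-1` U).

(* Main.v *)
Require Import Defs.
From HB Require Import structures.
From mathcomp Require Import all_boot all_order all_algebra.
From mathcomp Require Import all_classical all_reals all_analysis.
Local Open Scope classical_set_scope.
Local Open Scope ring_scope.

Lemma nbhs_prod_split (T : topologicalType) (x y : T) (P : set (T * T)) : nbhs (x, y) P ->
  exists A B, [/\ nbhs x A, nbhs y B & forall a b, A a -> B b -> P (a, b)].
Proof.
move=> [[A B] /= [hA hB] hP]. exists A, B; split => // a b Aa Bb. exact: (hP (a,b)).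
Qed.

Lemma set_pow_mono (T : Type) (mul : T -> T -> T) (one : T) (U U' : set T) n :
  U `<=` U' -> set_pow mul one U n `<=` set_pow mul one U' n.
Proof.
move=> sU; elim: n => [|n IH] //= z [a [b [Ua Sb ->]]].
by exists a, b; split => //; [apply: sU | apply: IH].
Qed.

Section TG.
Variables (T : topologicalType) (mul : T -> T -> T) (inv : T -> T) (one : T).
Hypothesis tg : topological_group mul inv one.

Lemma tg_left a x V : nbhs (mul a x) V -> nbhs x [set y | V (mul a y)].
Proof.
case: tg => _ cmul _ Vn.
have h : (fun y => mul a y) @ x --> mul a x.
  apply: (@continuous2_cvg _ _ _ _ (nbhs x) _ (fun y => a) (fun y => y) mul a x).
  - exact: (cmul (a, x)).
  - exact: cvg_cst.
  - exact: cvg_id.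
exact: h Vn.
Qed.

Lemma tg_invr c V : nbhs (mul (inv c) c) V -> nbhs c [set y | V (mul (inv y) c)].
Proof.
case: tg => _ cmul cinv Vn.
have h : (fun y => mul (inv y) c) @ c --> mul (inv c) c.
  apply: (@continuous2_cvg _ _ _ _ (nbhs c) _ inv (fun y => c) mul (inv c) c).
  - exact: (cmul (inv c, c)).
  - exact: cinv.
  - exact: cvg_cst.
exact: h Vn.
Qed.

Lemma tg_pow n V : nbhs one V -> exists U, nbhs one U /\ set_pow mul one U n `<=` V.
Proof.
case: tg => [[assoc m1x mx1 mVx mxV] cmul cinv].
elim: n V => [|n IH] V Vn.
  exists setT; split; first exact: filterT.
  by move=> z /= ->; apply: nbhs_singleton.
have : nbhs (one, one) [set p | V (mul p.1 p.2)].
  apply: (cmul (one, one)); by rewrite /= m1x.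
move=> /nbhs_prod_split [A [B [An Bn AB]]].
have [U2 [U2n sU2]] := IH (A `&` B) (filterI An Bn).
exists (A `&` B `&` U2); split; first by apply: filterI => //; apply: filterI.
move=> z /= [a [b [[[Aa Bb] _] Sb ->]]].
apply: (AB a b Aa).
have : set_pow mul one U2 n b.
  by apply: (@set_pow_mono _ mul one (A `&` B `&` U2) U2 n _ b Sb) => w [].
by move/sU2 => [].
Qed.

Lemma tg_sym U : nbhs one U -> exists W, [/\ open W, W one, W `<=` U &
  forall x, W x <-> W (inv x)].
Proof.
case: tg => [[assoc m1x mx1 mVx mxV] cmul cinv] Un.
have inv1 : inv one = one by rewrite -[RHS](mVx one) mx1.
have invK x : inv (inv x) = x.
  by rewrite -[LHS]mx1 -(mVx x) assoc (mVx (inv x)) m1x.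
exists (interior U `&` inv @^-1` interior U); split.
- apply: openI; first exact: open_interior.
  apply: open_comp; last exact: open_interior.
  by move=> y _; apply: cinv.
- by split => /=; rewrite ?inv1; exact: Un.
- by move=> y [/interior_subset].
- move=> x; split => -[h1 h2]; split => //=; first by rewrite invK.
  by move: h2; rewrite /preimage /= invK.
Qed.


End TG.

Theorem proposition4p3 (R : realType) (G : topologicalType)
    (mulG : G -> G -> G) (invG : G -> G) (oneG : G) (dd : G -> G -> R)
    (H : topologicalType) (mulH : H -> H -> H) (invH : H -> H) (oneH : H)
    (phi : G -> H) :
  polish_topometric_group mulG invG oneG dd ->
  steinhaus_property mulG invG oneG dd ->
  topological_group mulH invH oneH ->
  @second_countable H ->
  (forall x y : G, phi (mulG x y) = mulH (phi x) (phi y)) ->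
  metric_continuous dd phi ->
  continuous phi.
Proof.
move=> [[tgG _] dmet binv refine lsc] [k stein] tgH [B cB bB] phiM phic.
have tgG' := tgG.
case: tgG' => [[aG m1G mG1 mVG mGV] cmulG cinvG].
have tgH' := tgH. case: tgH' => [[aH m1H mH1 mVH mHV] _ _].
case: dmet => d0 d0E dsym dtri.
have phi1 : phi oneG = oneH.
  have e := phiM oneG oneG. rewrite m1G in e.
  by rewrite -(mVH (phi oneG)) {3}e aH mVH m1H.
have phiV x : phi (invG x) = invH (phi x).
  by rewrite -[LHS]mH1 -(mHV (phi x)) aH -phiM mVG phi1 m1H.
have key : forall V, nbhs oneH V -> nbhs oneG (phi @^-1` V).
  move=> V Vn.
  have [U [Un sU]] := @tg_pow _ _ _ _ tgH k.+1 V Vn.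
  have [W [oW W1 WU Wsym]] := @tg_sym _ _ _ _ tgH U Un.
  pose A := phi @^-1` W.
  have Asym : symmetric_set invG A.
    by move=> x; rewrite /A /preimage /= phiV; exact: Wsym.
  have Asynd : sigma_syndetic mulG A.
    have [f fI] := countable_injP _ cB.
    pose P n (x : G) := exists b, [/\ B b, f b = n & b (phi x)].
    have [g Hg] : exists g : nat -> G, forall n, (exists x, P n x) -> P n (g n).
      have [g Hg] : {g : nat -> G & forall n, (exists x, P n x) -> P n (g n)}.
        apply: (@choice nat G (fun n y => (exists x, P n x) -> P n y)) => n; case: (pselect (exists x, P n x)) => [[x Px]|nP].
          by exists x.
        by exists oneG.
      by exists g.
    exists g => x.
    have : nbhs (phi x) [set y | W (mulH (invH y) (phi x))].
      apply: (@tg_invr _ _ _ _ tgH); rewrite mVH; exact: open_nbhs_nbhs.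
    case: bB => _ /(_ (phi x)) bx /bx [b [Bb bpx] bsub].
    have [b' [Bb' fb' b'g]] := Hg (f b) (ex_intro _ x (ex_intro _ b (And3 Bb erefl bpx))).
    have bb : b' = b by apply: fI => //; apply: mem_set.
    subst b'.
    exists (f b); exists (mulG (invG (g (f b))) x).
      by rewrite /A /preimage /= phiM phiV; apply: bsub.
    by rewrite aG mGV m1G.
  have [e e0 eW] : exists2 e : R, 0 < e & [set y | dd oneG y < e] `<=` A.
    by apply: (phic W oW oneG); rewrite /preimage /= phi1.
  have powphi : forall n z, set_pow mulG oneG A n z -> set_pow mulH oneH W n (phi z).
    elim => [|n IH] z /=; first by move=> ->.
    move=> [a [b [Aa Sb ->]]]; exists (phi a), (phi b); split => //.
      exact: IH.
  have hint := stein A Asym Asynd e e0.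
  apply: filterS hint.
  move=> z [a Aa dza].
  have Wz : W (phi (mulG z (invG a))).
    apply: eW; rewrite /= dsym -(binv a (mulG z (invG a)) oneG).2 -aG mVG mG1 m1G.
    exact: dza.
  apply: sU; exists (phi (mulG z (invG a))), (phi a); split.
  - exact: WU.
  - exact: (@set_pow_mono _ mulH oneH W U k WU _ (powphi _ _ Aa)).
  - by rewrite -phiM -aG mVG mG1.
move=> x V Vn.
have V1n : nbhs oneH [set h | V (mulH (phi x) h)].
  by apply: (@tg_left _ _ _ _ tgH); rewrite mH1.
have Nn := key _ V1n.
have : nbhs x [set y | (phi @^-1` [set h | V (mulH (phi x) h)]) (mulG (invG x) y)].
  by apply: (@tg_left _ _ _ _ tgG); rewrite mVG.
apply: filterS => y; rewrite /preimage /= phiM phiV aH mHV m1H.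
by [].
Qed.
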